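(* Let $G$ be a connected threshold graph of order $n\ge 4$ and size $m$ with $n-1<m<\binom{n}{2}$, with $c$ type 1 vertices, backwards zero position sequence $(b_1,\ldots,b_z)$ and $F_1=\sum_{i=1}^z b_i^2$. Define $(\mathrm{LW}''_k)_{k\in\mathbb{N}_0}$ by $\mathrm{LW}''_0=1$ and \[\mathrm{LW}''_k=c\,\mathrm{LW}''_{k-1}+\sum_{r=0}^{k-3}\mathrm{LW}''_r\sum_{q\in\mathbb{N}_0}\binom{k-3-r-q}{q}F_1\Big(\sum_{i=1}^z b_i\Big)^q\qquad(k\in\mathbb{N}).\] Then for every $k\ge 3$, \[\mathrm{LW}''_k-(c+1)\mathrm{LW}''_{k-1}+\Big(c-\sum_{i=1}^z b_i\Big)\mathrm{LW}''_{k-2}+\Big(c\sum_{i=1}^z b_i-F_1\Big)\mathrm{LW}''_{k-3}=0.\]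
   Context: A threshold graph is a simple graph whose vertices can be ordered $v_1,\ldots,v_n$ so that for each $2\le i\le n$, $v_i$ is either adjacent to all of $v_1,\ldots,v_{i-1}$ (then $a_i=1$) or to none of them (then $a_i=0$); by convention $a_1=1$. Vertex $v_i$ is of type 1 if $a_i=1$ and of type 0 if $a_i=0$; $c$ and $z$ are the numbers of type 1 and type 0 vertices. The backwards zero position sequence $(b_1,\ldots,b_z)$ is defined by letting $b_i$ be the number of type 1 vertices appearing after the $i$-th type 0 vertex in the order $v_1,\ldots,v_n$. Binomial coefficients $\binom{a}{q}$ with integer $a$ and $q\in\mathbb{N}_0$ are taken to be $0$ whenever $a<q$. *)

(* Defs.v *)
From mathcomp Require Import all_boot all_order all_algebra.
Set Implicit Arguments. Unset Strict Implicit. Unset Printing Implicit Defensive.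
Import GRing.Theory Num.Theory.

(* Threshold graph on vertices 'I_n (vertex v_{i+1} is the ordinal i),
   with creation sequence a : 'I_n -> bool (a i = true means type 1). *)

Definition is_threshold_graph_of (n : nat) (a : 'I_n -> bool) (e : rel 'I_n) :=
  [/\ forall i : 'I_n, val i = 0 -> a i,
      forall i j : 'I_n, (i < j)%N -> e i j = a j,
      symmetric e & irreflexive e].

Definition connected_graph (n : nat) (e : rel 'I_n) :=
  forall x y : 'I_n, connect e x y.

Definition graph_size (n : nat) (e : rel 'I_n) : nat :=
  #|[set p : 'I_n * 'I_n | (p.1 < p.2)%N && e p.1 p.2]|.

Definition ctype1 (n : nat) (a : 'I_n -> bool) : nat := #|[set i | a i]|.

Definition bzps (n : nat) (a : 'I_n -> bool) : seq nat :=
  map (fun i : 'I_n => #|[set j : 'I_n | (i < j)%N && a j]|)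
      (filter (fun i : 'I_n => ~~ a i) (enum 'I_n)).

Definition sum_b (n : nat) (a : 'I_n -> bool) : nat := sumn (bzps a).
Definition F1 (n : nat) (a : 'I_n -> bool) : nat :=
  sumn [seq b ^ 2 | b <- bzps a].

(* Main.v *)
Require Import Defs.
From mathcomp Require Import all_boot all_order all_algebra.
From mathcomp Require Import ring.
Import GRing.Theory Num.Theory.
Local Open Scope ring_scope.

Section S.
Variable S : int.
Definition hh (j : nat) : int := \sum_(0 <= q < j.+1) ('C(j - q, q))%:Z * S ^+ q.

Lemma hhN j N : (j < N)%N -> \sum_(0 <= q < N) ('C(j - q, q))%:Z * S ^+ q = hh j.
Proof.
move=> jN; rewrite /hh (big_cat_nat _ (n := j.+1)) //= [X in _ + X]big1_seq ?addr0 //.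
move=> q /andP[_]; rewrite mem_index_iota => /andP[jq _].
have -> : (j - q = 0)%N by apply/eqP; rewrite subn_eq0 ltnW.
by rewrite bin0n; case: q jq => // q _; rewrite mul0r.
Qed.

Lemma binid j q : ('C(j.+1 - q, q.+1) = 'C(j - q, q) + 'C(j - q, q.+1))%N.
Proof.
case: (leqP q j) => hq.
  by rewrite subSn // binS addnC.
rewrite (_ : j.+1 - q = 0)%N; last by apply/eqP; rewrite subn_eq0.
rewrite (_ : j - q = 0)%N; last by apply/eqP; rewrite subn_eq0 ltnW.
by rewrite !bin0n; case: q hq.
Qed.

Lemma hh0 : hh 0 = 1.
Proof. by rewrite /hh big_nat1 expr0 mulr1. Qed.
Lemma hh1 : hh 1 = 1.
Proof. by rewrite /hh big_nat_recr //= big_nat1 /= expr0 mulr1 bin0n mul0r addr0. Qed.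

Lemma hhS j : hh j.+2 = hh j.+1 + S * hh j.
Proof.
rewrite {1}/hh big_nat_recl // subn0 bin0 expr0 mulr1.
under eq_big_nat => q _ do rewrite subSS binid PoszD mulrDl exprS.
rewrite big_split /=.
have E1 : S * hh j = \sum_(0 <= i < j.+2) ('C(j - i, i))%:Z * (S * S ^+ i).
  by rewrite -(@hhN j j.+2) // mulr_sumr; apply: eq_bigr => i _; ring.
have E2 : hh j.+1 = 1 + \sum_(0 <= i < j.+2) ('C(j - i, i.+1))%:Z * (S * S ^+ i).
  rewrite -(@hhN j.+1 j.+3) // big_nat_recl // subn0 bin0 expr0 mulr1.
  by congr (_ + _); apply: eq_bigr => i _; rewrite subSS exprS.
rewrite E1 E2; ring.
Qed.
End S.

From mathcomp Require Import zify.

Definition Tf (LW : nat -> int) (S : int) (k : nat) : int :=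
  \sum_(0 <= r < k - 2) LW r * hh S (k - 3 - r).

Lemma Tform LW S j : Tf LW S j.+3 = \sum_(0 <= r < j.+1) LW r * hh S (j - r).
Proof. by rewrite /Tf !subSS !subn0. Qed.

Lemma Tsmall LW S k : (k <= 2)%N -> Tf LW S k = 0.
Proof. by move=> hk; rewrite /Tf big_geq //; lia. Qed.

Lemma Trec LW S j : Tf LW S j.+3 = Tf LW S j.+2 + S * Tf LW S j.+1 + LW j.
Proof.
case: j => [|[|i]].
- by rewrite Tform !Tsmall // big_nat1 hh0 mulr0 !add0r mulr1.
- rewrite !Tform (@Tsmall LW S 2) // big_nat_recr //= big_nat1 big_nat1.
  rewrite (_ : (1-0 = 1)%N) // (_ : (1-1=0)%N) // (_ : (0-0 = 0)%N) //.
  by rewrite hh0 hh1 !mulr1 mulr0 addr0.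
rewrite !Tform big_nat_recr //= big_nat_recr //= [in RHS]big_nat_recr //=.
rewrite !subnn (_ : (i.+2 - i.+1 = 1)%N); last by lia.
rewrite hh0 hh1 !mulr1.
have -> : \sum_(0 <= r < i.+1) LW r * hh S (i.+2 - r)
   = \sum_(0 <= r < i.+1) LW r * hh S (i.+1 - r) + S * \sum_(0 <= r < i.+1) LW r * hh S (i - r).
  rewrite mulr_sumr -big_split /=; apply: eq_big_nat => r /andP[_ hr].
  rewrite (_ : (i.+2 - r = (i - r).+2)%N); last by lia.
  rewrite (_ : (i.+1 - r = (i - r).+1)%N); last by lia.
  rewrite hhS; ring.
ring.
Qed.

Theorem lemma5p3_alg (c S F : int) (LW : nat -> int) :
  (forall k : nat, (1 <= k)%N ->
     LW k = c * LW k.-1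
            + \sum_(0 <= r < k - 2)
                LW r * \sum_(0 <= q < k)
                  ('C(k - 3 - r - q, q))%:Z * F * S ^+ q) ->
  forall k : nat, (3 <= k)%N ->
    LW k - (c + 1) * LW k.-1 + (c - S) * LW (k - 2)%N + (c * S - F) * LW (k - 3)%N = 0.
Proof.
move=> Hrec.
have HL : forall k, (1 <= k)%N -> LW k = c * LW k.-1 + F * Tf LW S k.
  move=> k hk; rewrite Hrec //; congr (_ + _); rewrite /Tf mulr_sumr.
  apply: eq_big_nat => r /andP[_ hr].
  rewrite -(@hhN S (k - 3 - r) k); last by lia.
  rewrite mulrCA; congr (_ * _); rewrite mulr_sumr; apply: eq_bigr => q _; ring.
case=> [|[|[|j]]] // _.
rewrite /= !subSS !subn0 (HL j.+3) // Trec (HL j.+2) // (HL j.+1) //=; ring.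
Qed.

Theorem lemma5p3 (n m : nat) (a : 'I_n -> bool) (e : rel 'I_n)
  (LW : nat -> int) :
  is_threshold_graph_of a e ->
  connected_graph e ->
  (4 <= n)%N ->
  graph_size e = m ->
  (n.-1 < m)%N -> (m < 'C(n, 2))%N ->
  LW 0%N = 1 ->
  (forall k : nat, (1 <= k)%N ->
     LW k = (ctype1 a)%:Z * LW k.-1
            + \sum_(0 <= r < k - 2)
                LW r * \sum_(0 <= q < k)
                  ('C(k - 3 - r - q, q))%:Z * (F1 a)%:Z * (sum_b a)%:Z ^+ q) ->
  forall k : nat, (3 <= k)%N ->
    LW k - ((ctype1 a)%:Z + 1) * LW k.-1
    + ((ctype1 a)%:Z - (sum_b a)%:Z) * LW (k - 2)%N
    + ((ctype1 a)%:Z * (sum_b a)%:Z - (F1 a)%:Z) * LW (k - 3)%N = 0.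
Proof.
move=> _ _ _ _ _ _ _ Hrec; exact: lemma5p3_alg Hrec.
Qed.
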